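(* Let $R$ be a unital associative algebra over an infinite field $F$, let $n>1$ be an integer, and let $p\in F[x]$ be a nonconstant polynomial. If $A\in\mathrm{M}_n(R)$ is similar (via an invertible matrix in $\mathrm{M}_n(R)$) to a matrix in $\mathrm{M}_n(R)$ all of whose diagonal entries are zero, then there exist $A_1,B_1\in\mathrm{M}_n(R)$ with $A=p(A_1B_1)-p(B_1A_1)$. *)

(* Defs.v *)
From HB Require Import structures.
From mathcomp Require Import all_boot all_order all_algebra.
Set Implicit Arguments. Unset Strict Implicit. Unset Printing Implicit Defensive.
Import GRing.Theory.
Local Open Scope ring_scope.

Definition infinite_field (F : fieldType) : Prop :=
  forall s : seq F, exists x : F, x \notin s.

Definition mxpeval (F : fieldType) (R : algType F) (n : nat)
  (p : {poly F}) (M : 'M[R]_n) : 'M[R]_n :=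
  \sum_(i < size p) ((p`_i)%:A : R)%:M *m (M ^+ i).

(* Similarity in M_n(R) via an invertible matrix of M_n(R)
   (R is in general non-commutative, so invertibility is two-sided). *)
Definition mx_similar (R : pzRingType) (n : nat) (A B : 'M[R]_n) : Prop :=
  exists P Q : 'M[R]_n,
    [/\ P *m Q = 1%:M, Q *m P = 1%:M & A = P *m B *m Q].

Definition zero_diag (R : pzRingType) (n : nat) (B : 'M[R]_n) : Prop :=
  forall i : 'I_n, B i i = 0.

(* Main.v *)
Require Import Defs.
From HB Require Import structures.
From mathcomp Require Import all_boot all_order all_algebra zify.
Import GRing.Theory.
Local Open Scope ring_scope.

Definition lev {R : pzRingType} {n : nat} (r : 'I_n -> nat) (k : nat) (W : 'M[R]_n) :=
  forall i j, (r j < r i + k)%N -> W i j = 0.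

Lemma lev_mul {R : pzRingType} {n} {r k l} {N W : 'M[R]_n} :
  lev r k N -> lev r l W -> lev r (k + l) (N *m W).
Proof.
move=> hN hW i j hij; rewrite mxE; apply: big1 => m _.
case: (ltnP (r m) (r i + k)) => h; first by rewrite hN // mul0r.
by rewrite hW ?mulr0 //; apply: (leq_trans hij); rewrite addnA leq_add2r.
Qed.

Lemma lev_add {R : pzRingType} {n} r k (N W : 'M[R]_n) :
  lev r k N -> lev r k W -> lev r k (N + W).
Proof. by move=> hN hW i j hij; rewrite mxE hN ?hW ?addr0. Qed.

Lemma lev_sum {R : pzRingType} {n} r k m (W : nat -> 'M[R]_n) :
  (forall l, lev r k (W l)) -> lev r k (\sum_(l < m) W l).
Proof. by move=> hW i j hij; rewrite summxE big1 // => l _; rewrite hW. Qed.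

Lemma lev_top {R : pzRingType} {n} {r} (hr : forall i, (r i < n)%N) (W : 'M[R]_n) :
  lev r n W -> W = 0.
Proof.
move=> hW; apply/matrixP => i j; rewrite mxE hW //.
by apply: (leq_trans (hr j)); rewrite leq_addl.
Qed.

Lemma lev_exp {R : pzRingType} {n} {r} {N : 'M[R]_n} k :
  lev r 1 N -> lev r k (N ^+ k).
Proof.
move=> hN; elim: k => [|k IH].
  by move=> i j; rewrite addn0 expr0 -idmxE mxE => h; case: eqP => // e; rewrite e ltnn in h.
by rewrite exprS -mulmxE -add1n; apply: lev_mul.
Qed.

Definition Phi {F : fieldType} {R : algType F} {n} (r : 'I_n -> nat) (g : 'I_n -> F)
  (W : 'M[R]_n) : 'M[R]_n :=
  \matrix_(i, j) if (r i < r j)%N then ((g j - g i)^-1) *: W i j else 0.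

Lemma lev_Phi {F : fieldType} {R : algType F} {n} r g k (W : 'M[R]_n) :
  lev r k W -> lev r k (Phi r g W).
Proof. by move=> hW i j h; rewrite mxE; case: ifP => _ //; rewrite hW ?scaler0. Qed.

Definition Gm {F : fieldType} (R : algType F) {n} (g : 'I_n -> F) : 'M[R]_n :=
  diag_mx (\row_i ((g i)%:A : R)).

Lemma Phi_comm {F : fieldType} {R : algType F} {n} r (g : 'I_n -> F) (W : 'M[R]_n) :
  injective g -> lev r 1 W ->
  Gm R g *m Phi r g W - Phi r g W *m Gm R g = - W.
Proof.
move=> ig hW; apply/matrixP => i j.
rewrite /Gm mul_diag_mx mul_mx_diag !mxE.
case: ifP => h.
  rewrite mulr_algl mulr_algr !scalerA -scalerBl.
  have ne : g j - g i != 0.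
    rewrite subr_eq0; apply/eqP => /ig e; by rewrite e ltnn in h.
  rewrite -mulrBl -opprB mulNr divff // scaleN1r //.
by rewrite mul0r mulr0 subrr hW ?oppr0 // addn1 ltnS leqNgt h.
Qed.

Lemma lev_le {R : pzRingType} {n} {r} a b {W : 'M[R]_n} :
  (b <= a)%N -> lev r a W -> lev r b W.
Proof. by move=> hab hW i j h; apply: hW; apply: (leq_trans h); rewrite leq_add2l. Qed.

Lemma diagonalize {F : fieldType} {R : algType F} {n} (r : 'I_n -> nat)
  (hr : forall i, (r i < n)%N) (g : 'I_n -> F) (ig : injective g)
  (N : 'M[R]_n) (hN : lev r 1 N) :
  exists U Ui : 'M[R]_n, [/\ U *m Ui = 1%:M, Ui *m U = 1%:M &
     Gm R g + N = U *m Gm R g *m Ui].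
Proof.
case: n r hr g ig N hN => [|m] r hr g ig N hN.
  exists 1%:M, 1%:M; split; try by rewrite mulmx1.
  by apply/matrixP => [[]].
pose L := fun W => Phi r g (N *m W).
have levL : forall k, lev r k (iter k L 1%:M).
  elim=> [|k IH] /=.
    by move=> i j; rewrite addn0 mxE => h; case: eqP => // e; rewrite e ltnn in h.
  by apply: lev_Phi; have := lev_mul hN IH; rewrite add1n.
pose U := \sum_(k < m.+1) iter k L 1%:M.
have key : (Gm R g + N) *m U = U *m Gm R g.
  apply/eqP; rewrite mulmxDl -subr_eq0 addrAC addr_eq0; apply/eqP.
  rewrite /U mulmx_sumr mulmx_suml -sumrB big_ord_recl /= mulmx1 mul1mx subrr add0r.
  rewrite mulmx_sumr big_ord_recr /= (lev_top hr (N *m iter m L 1%:M)); last first.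
    by have := lev_mul hN (levL m); rewrite add1n.
  rewrite addr0 -sumrN; apply: eq_bigr => k _ /=.
  rewrite /L Phi_comm //.
  exact: (lev_le (1 + k) 1 (leq_addr k 1) (lev_mul hN (levL k))).
pose N' := \sum_(k < m) iter k.+1 L 1%:M.
have UE : U = 1%:M + N' by rewrite /U big_ord_recl.
have hN' : lev r 1 N'.
  exact: (@lev_sum _ _ r 1 m (fun l => iter l.+1 L 1%:M) (fun l => lev_le l.+1 1 (ltn0Sn l) (levL l.+1))).
pose x := - N'.
pose S := \sum_(k < m.+1) x ^+ k.
have x0 : x ^+ m.+1 = 0.
  rewrite /x exprNn (lev_top hr _ (lev_exp m.+1 hN')) mulr0 //.
have e1 : (x - 1) * S = -1 by rewrite -subrX1 x0 sub0r.
have cS : GRing.comm (x - 1) S.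
  apply: commr_sum => k _; apply: commrX.
  by rewrite /GRing.comm mulrBl mulrBr mul1r mulr1.
have Ux : U = - (x - 1) by rewrite UE /x opprB opprK idmxE addrC.
have h1 : U *m S = 1%:M by rewrite mulmxE Ux mulNr e1 opprK idmxE.
have h2 : S *m U = 1%:M by rewrite mulmxE Ux mulrN -cS e1 opprK idmxE.
exists U, S; split => //.
by rewrite -key -mulmxA h1 mulmx1.
Qed.

Lemma scal_comm {F : fieldType} {R : algType F} {n} (c : F) (X : 'M[R]_n) :
  ((c%:A : R)%:M) *m X = X *m (c%:A : R)%:M.
Proof.
rewrite mul_scalar_mx; apply/matrixP => i j; rewrite !mxE (bigD1 j) //= big1.
  by rewrite mxE eqxx mulr1n addr0 mulr_algl mulr_algr.
by move=> k /negbTE ne; rewrite mxE ne mulr0n mulr0.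
Qed.

Lemma mxpeval_conj {F : fieldType} {R : algType F} {n} (p : {poly F})
  (X Xi M : 'M[R]_n) : X *m Xi = 1%:M -> Xi *m X = 1%:M ->
  mxpeval p (X *m M *m Xi) = X *m mxpeval p M *m Xi.
Proof.
move=> h1 h2.
have pw : forall k, (X *m M *m Xi) ^+ k = X *m (M ^+ k) *m Xi.
  elim=> [|k IH]; first by rewrite !expr0 -idmxE mulmx1 h1.
  rewrite !exprS -!mulmxE IH !mulmxA -[X *m M *m Xi *m X](mulmxA) h2 mulmx1 //.
rewrite /mxpeval mulmx_sumr mulmx_suml; apply: eq_bigr => k _.
by rewrite pw !mulmxA scal_comm.
Qed.

Lemma mxpeval_diag {F : fieldType} {R : algType F} {n} (p : {poly F})
  (a : 'I_n -> F) :
  mxpeval p (diag_mx (\row_i ((a i)%:A : R))) =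
  diag_mx (\row_i (((p.[a i]))%:A : R)).
Proof.
have pw : forall k, (diag_mx (\row_i ((a i)%:A : R))) ^+ k =
                    diag_mx (\row_i (((a i) ^+ k)%:A : R)).
  elim=> [|k IH].
    by rewrite expr0 -idmxE; apply/matrixP => i j; rewrite !mxE scale1r.
  rewrite exprS -mulmxE IH mul_diag_mx; apply/matrixP => i j; rewrite !mxE.
  by case: eqP => _; rewrite ?mulr0n ?mulr0 ?mulr1n // -scalerAl mul1r scalerA -exprS.
rewrite /mxpeval; apply/matrixP => i j; rewrite summxE !mxE horner_coef.
rewrite scaler_suml -sumrMnl; apply: eq_bigr => k _.
rewrite pw mul_scalar_mx !mxE.
by case: eqP => _; rewrite ?mulr0n ?mulr0 ?mulr1n // mulr_algl scalerA.
Qed.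

Lemma exists_uniq_seq {F : fieldType} (hF : infinite_field F) m :
  exists s : seq F, size s = m /\ uniq s.
Proof.
elim: m => [|m [s [hs us]]]; first by exists [::].
have [x hx] := hF s; exists (x :: s); by rewrite /= hs hx us.
Qed.

Lemma pick_avoid {F : fieldType} (hF : infinite_field F) (p : {poly F})
  (hp : (1 < size p)%N) (s : seq F) : exists x, p.[x] \notin s.
Proof.
pose q := \prod_(c <- s) (p - c%:P).
have qn0 : q != 0.
  rewrite prodf_seq_neq0; apply/allP => c _ /=; rewrite subr_eq0.
  apply/eqP => e; move: hp; rewrite e ltnNge size_polyC_leq1 //.
have [L [hL uL]] := exists_uniq_seq hF (size q).
have : ~~ all (root q) L.
  apply/negP => hall; have := max_poly_roots qn0 hall uL; by rewrite hL ltnn.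
case/allPn => x _ hx; exists x; apply/negP => hin; move: hx.
rewrite /root horner_prod prodf_seq_eq0 => /negP; apply; apply/hasP; exists p.[x] => //.
by rewrite /= hornerD hornerN hornerC subrr.
Qed.

Lemma exists_alpha {F : fieldType} (hF : infinite_field F) (p : {poly F})
  (hp : (1 < size p)%N) n : exists a : 'I_n -> F, injective (fun i => p.[a i]).
Proof.
have [t [ht ut]] : exists t : seq F, size t = n /\ uniq (map (horner p) t).
  elim: n => [|n [t [ht ut]]]; first by exists [::].
  have [x hx] := pick_avoid hF _ hp (map (horner p) t).
  by exists (x :: t); rewrite /= ht hx ut.
exists (fun i => nth 0 t i) => i j /= e.
apply/val_inj/eqP; rewrite -(nth_uniq 0 _ _ ut) ?size_map ?ht ?ltn_ord //.
by rewrite !(nth_map 0) ?ht ?ltn_ord //; apply/eqP; exact: e.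
Qed.

Theorem theorem3p4 (F : fieldType) (R : algType F) (n : nat)
  (p : {poly F}) (A : 'M[R]_n) :
  infinite_field F -> (1 < n)%N -> (1 < size p)%N ->
  (exists B : 'M[R]_n, zero_diag B /\ mx_similar A B) ->
  exists A1 B1 : 'M[R]_n,
    A = mxpeval p (A1 *m B1) - mxpeval p (B1 *m A1).
Proof.
move=> hF hn hp [B [zB [P [Q [hPQ hQP hA]]]]].
have [a ia] := exists_alpha hF _ hp n.
pose g := fun i => p.[a i].
pose Nu : 'M[R]_n := \matrix_(i, j) if (i < j)%N then B i j else 0.
pose Nl : 'M[R]_n := \matrix_(i, j) if (j < i)%N then - B i j else 0.
have hNu : lev (fun i : 'I_n => nat_of_ord i) 1 Nu.
  by move=> i j h; rewrite mxE; move: h; rewrite addn1 ltnS leqNgt => /negbTE ->.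
have hNl : lev (fun i : 'I_n => (n - i.+1)%N) 1 Nl.
  move=> i j h; rewrite mxE; case: ifP => // h4.
  have := ltn_ord i; have := ltn_ord j; move: h h4; lia.
have [U [Ui [h1 h2 eU]]] := diagonalize (fun i : 'I_n => nat_of_ord i) (@ltn_ord n) g ia Nu hNu.
have hr : forall i : 'I_n, (n - i.+1 < n)%N by move=> i; have := ltn_ord i; lia.
have [V [Vi [k1 k2 eV]]] := diagonalize (fun i : 'I_n => (n - i.+1)%N) hr g ia Nl hNl.
have eB : B = (Gm R g + Nu) - (Gm R g + Nl).
  apply/matrixP => i j; rewrite !mxE.
  rewrite opprD addrACA subrr add0r.
  case: (ltngtP i j) => h; rewrite ?subr0 ?sub0r ?opprK //.
  have e : i = j by apply: val_inj.
  by rewrite e zB.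
pose D : 'M[R]_n := diag_mx (\row_i ((a i)%:A : R)).
have hD : mxpeval p D = Gm R g by rewrite mxpeval_diag.
exists ((P *m U) *m (Vi *m Q)), ((P *m V) *m D *m (Ui *m Q)).
have e1 : (P *m U) *m (Vi *m Q) *m ((P *m V) *m D *m (Ui *m Q)) =
          (P *m U) *m D *m (Ui *m Q).
  rewrite !mulmxA -(mulmxA (P *m U *m Vi) Q P) hQP mulmx1.
  by rewrite -(mulmxA (P *m U) Vi V) k2 mulmx1.
have e2 : ((P *m V) *m D *m (Ui *m Q)) *m ((P *m U) *m (Vi *m Q)) =
          (P *m V) *m D *m (Vi *m Q).
  rewrite !mulmxA -(mulmxA (P *m V *m D *m Ui) Q P) hQP mulmx1.
  by rewrite -(mulmxA (P *m V *m D) Ui U) h2 mulmx1.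
rewrite e1 e2 !mxpeval_conj ?hD.
  by rewrite hA eB eU eV mulmxBr mulmxBl !mulmxA.
- by rewrite !mulmxA -(mulmxA P V Vi) k1 mulmx1 hPQ.
- by rewrite !mulmxA -(mulmxA Vi Q P) hQP mulmx1 k2.
- by rewrite !mulmxA -(mulmxA P U Ui) h1 mulmx1 hPQ.
- by rewrite !mulmxA -(mulmxA Ui Q P) hQP mulmx1 h2.
Qed.
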